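(* Let $V$ be a nonempty set, $E\subset V\times V$, $W\subset V$. (a) If $W',W''\subset W$ are such that $W'$ is contained in one equivalence class and $W''$ in another, distinct, equivalence class of the partial equivalence relation $C_W$, then $\operatorname{cl}_W(W')\cap\operatorname{cl}_W(W'')=\emptyset$. (b) Conversely, if $W',W''\subset V$ satisfy $W'\cap W''=\emptyset$, $W'\cup W''=W$ and $\operatorname{cl}_W(W')\cap\operatorname{cl}_W(W'')=\emptyset$, then there do not exist $w'\in W'$ and $w''\in W''$ lying in the same equivalence class of $C_W$ (i.e. with $w'\,C_W\,w''$).
   Context: Relations on $V$: $x\,R\,y$ means $(x,y)\in R$; composition $RR'$: $x(RR')y$ iff there is $z$ with $xRz$ and $zR'y$; $R^{-1}$ is the converse; $R^0=\Delta$, $R^{n+1}=RR^n$, $R^+=\bigcup_{k\ge1}R^k$, $R^*=\bigcup_{k\ge0}R^k$. For $S\subset V$, $\Delta_S=\{(x,x):x\in S\}$, $\Delta=\Delta_V$. For any relation $F$, $\mathcal T_F=\{O\subset V: OF\subset O\}$ is a topology on $V$, where $OF=\{y:\exists o\in O,\ oFy\}$. With $W^c=V\setminus W$: $E_W=\Delta_{W^c}E$; $B_W=E(E_W)^*$; $B_W^-=(B_W)^{-1}=(E_W^{-1})^*E^{-1}$; $K_W=B_W^-\Delta_{W^c}B_W$; $C_W=(\Delta_WK_W\Delta_W)^+\cup\Delta_W$, a symmetric transitive relation (an equivalence relation on $W$). For $S\subset V$, $\operatorname{cl}_W(S)$ is the topological closure of $S$ in the topology $\mathcal T_{E_W}$.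 *)

(* Defs.v *)
Set Implicit Arguments.

Section Rel.
Variable V : Type.
Definition rel := V -> V -> Prop.
Definition vset := V -> Prop.

Definition comp (R R' : rel) : rel := fun x y => exists z, R x z /\ R' z y.
Definition conv (R : rel) : rel := fun x y => R y x.
Definition diag (S : vset) : rel := fun x y => S x /\ x = y.
Definition setC (S : vset) : vset := fun x => ~ S x.
Definition setT : vset := fun _ => True.
Fixpoint rpow (R : rel) (n : nat) : rel :=
  match n with
  | O => diag setT
  | S k => comp R (rpow R k)
  end.
Definition rplus (R : rel) : rel := fun x y => exists k, 1 <= k /\ rpow R k x y.
Definition rstar (R : rel) : rel := fun x y => exists k, rpow R k x y.
Definition runion (R R' : rel) : rel := fun x y => R x y \/ R' x y.

Definition E_W (E : rel) (W : vset) : rel := comp (diag (setC W)) E.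
Definition B_W (E : rel) (W : vset) : rel := comp E (rstar (E_W E W)).
Definition Bm_W (E : rel) (W : vset) : rel := conv (B_W E W).
Definition K_W (E : rel) (W : vset) : rel :=
  comp (Bm_W E W) (comp (diag (setC W)) (B_W E W)).
Definition C_W (E : rel) (W : vset) : rel :=
  runion (rplus (comp (diag W) (comp (K_W E W) (diag W)))) (diag W).

Definition image (O : vset) (F : rel) : vset := fun y => exists o, O o /\ F o y.
Definition open_F (F : rel) (O : vset) : Prop := forall y, image O F y -> O y.
Definition closed_F (F : rel) (C : vset) : Prop := open_F F (setC C).
Definition closure_F (F : rel) (S : vset) : vset :=
  fun x => forall C, closed_F F C -> (forall y, S y -> C y) -> C x.
Definition cl_W (E : rel) (W : vset) (S : vset) : vset := closure_F (E_W E W) S.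
End Rel.

(* Main.v *)
Require Import Defs.
From Stdlib Require Import Classical Relation_Operators Operators_Properties.

Section Aux.
Variable V : Type.
Variable E : V -> V -> Prop.
Variable W : V -> Prop.

Let R := comp (diag W) (comp (K_W E W) (diag W)).

Lemma cl_char (A : V -> Prop) x :
  cl_W E W A x -> exists s, A s /\ rstar (E_W E W) x s.
Proof.
  intro H. apply (H (fun x => exists s, A s /\ rstar (E_W E W) x s)).
  - intros y [o [Ho Hoy]] [s [Hs [k Hk]]]. apply Ho.
    exists s. split; [exact Hs|]. exists (S k). exists y. split; assumption.
  - intros y Hy. exists y. split; [exact Hy|]. exists 0. split; [exact I|reflexivity].
Qed.

Lemma cl_intro (A : V -> Prop) k : forall x s,
  rpow (E_W E W) k x s -> A s -> cl_W E W A x.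
Proof.
  induction k as [|k IH]; intros x s Hk Hs C HC HSC.
  - destruct Hk as [_ ->]. apply HSC; exact Hs.
  - destruct Hk as [z [Hxz Hz]].
    assert (C z) by (exact (IH z s Hz Hs C HC HSC)).
    apply NNPP. intro Hn. apply (HC z); [|assumption]. exists x. split; assumption.
Qed.

Lemma rpow_rt k : forall a b, rpow R k a b -> clos_refl_trans V R a b.
Proof.
  induction k as [|k IH]; intros a b H.
  - destruct H as [_ ->]. apply rt_refl.
  - destruct H as [z [H1 H2]]. eapply rt_trans; [apply rt_step; exact H1|].
    apply IH; exact H2.
Qed.

Lemma C_rt a b : C_W E W a b -> clos_refl_trans V R a b.
Proof.
  intros [[k [_ Hk]] | [_ ->]]. - eapply rpow_rt; eauto. - apply rt_refl.
Qed.

Lemma rt_C a b : W a -> clos_refl_trans V R a b -> C_W E W a b.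
Proof.
  intros Ha H. apply clos_rt_rt1n in H. revert Ha.
  induction H as [x|x y z Hxy Hyz IH]; intro Hx.
  - right. split; auto.
  - assert (Hy : W y).
    { destruct Hxy as [x1 [_ [y1 [_ [Hy ->]]]]]. exact Hy. }
    destruct (IH Hy) as [[k [_ Hk]] | [_ <-]].
    + left. exists (S k). split; [apply le_n_S, le_0_n|]. simpl. exists y. split; [exact Hxy|exact Hk].
    + left. exists 1. split; [auto|]. simpl. exists y. split; [exact Hxy|]. split; [exact I|reflexivity].
Qed.

Lemma K_sym a b : K_W E W a b -> K_W E W b a.
Proof.
  intros [u [H1 [u' [[Hu <-] H2]]]]. exists u. split; [exact H2|].
  exists u. split; [split; [exact Hu|reflexivity]|exact H1].
Qed.

Lemma R_sym a b : R a b -> R b a.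
Proof.
  intros [a' [[Ha Ea] [b' [Hk [Hb Eb]]]]]. subst a' b'.
  exists b. split; [split; [exact Hb|reflexivity]|].
  exists a. split; [apply K_sym; exact Hk|split; [exact Ha|reflexivity]].
Qed.

Lemma rt_sym a b : clos_refl_trans V R a b -> clos_refl_trans V R b a.
Proof.
  induction 1. - apply rt_step, R_sym; assumption. - apply rt_refl.
  - eapply rt_trans; eauto.
Qed.

End Aux.

Theorem lemma2 (V : Type) (v0 : V) (E : V -> V -> Prop) (W : V -> Prop) :
  (* (a) *)
  (forall W' W'' : V -> Prop,
     (forall x, W' x -> W x) -> (forall x, W'' x -> W x) ->
     forall a b : V, W a -> W b -> ~ C_W E W a b ->
     (forall x, W' x -> C_W E W a x) ->
     (forall x, W'' x -> C_W E W b x) ->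
     forall x, ~ (cl_W E W W' x /\ cl_W E W W'' x))
  /\
  (* (b) *)
  (forall W' W'' : V -> Prop,
     (forall x, ~ (W' x /\ W'' x)) ->
     (forall x, (W' x \/ W'' x) <-> W x) ->
     (forall x, ~ (cl_W E W W' x /\ cl_W E W W'' x)) ->
     ~ (exists w' w'', W' w' /\ W'' w'' /\ C_W E W w' w'')).
Proof.
  split.
  - intros W' W'' H1 H2 a b Ha Hb Hab Ha' Hb'' x [Hx1 Hx2].
    apply cl_char in Hx1 as [s1 [Hs1 [k1 Hk1]]].
    apply cl_char in Hx2 as [s2 [Hs2 [k2 Hk2]]].
    apply Hab. apply rt_C; [exact Ha|].
    apply (rt_trans _ _ _ s1); [apply C_rt; auto|].
    apply (rt_trans _ _ _ s2); [|apply rt_sym, C_rt; auto].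
    destruct (classic (W x)) as [HW|HW].
    + destruct k1 as [|k1]; [|destruct Hk1 as [z [[x0 [[Hn _] _]] _]]; contradiction].
      destruct k2 as [|k2]; [|destruct Hk2 as [z [[x0 [[Hn _] _]] _]]; contradiction].
      destruct Hk1 as [_ <-]. destruct Hk2 as [_ <-]. apply rt_refl.
    + destruct k1 as [|k1]; [destruct Hk1 as [_ <-]; exfalso; auto|].
      destruct k2 as [|k2]; [destruct Hk2 as [_ <-]; exfalso; auto|].
      destruct Hk1 as [z1 [[x1 [[_ <-] Ez1]] Hz1]].
      destruct Hk2 as [z2 [[x2 [[_ <-] Ez2]] Hz2]].
      apply rt_step. exists s1. split; [split; auto|].
      exists s2. split; [|split; auto].
      exists x. split.
      * exists z1. split; [exact Ez1|exists k1; exact Hz1].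
      * exists x. split; [split; [exact HW|reflexivity]|].
        exists z2. split; [exact Ez2|exists k2; exact Hz2].
  - intros W' W'' Hdis Hcov Hcl [w' [w'' [Hw' [Hw'' HC]]]].
    destruct HC as [[k [_ Hk]] | [_ <-]]; [|exact (Hdis w' (conj Hw' Hw''))].
    revert w' Hw' Hk. induction k as [|k IH]; intros p Hp Hk.
    + destruct Hk as [_ <-]. exact (Hdis p (conj Hp Hw'')).
    + destruct Hk as [q [Hpq Hq]].
      assert (HqW : W q) by (destruct Hpq as [x1 [_ [y1 [_ [Hy ->]]]]]; exact Hy).
      destruct (proj2 (Hcov q) HqW) as [Hq'|Hq''].
      * exact (IH q Hq' Hq).
      * destruct Hpq as [p1 [[_ <-] [q1 [HK [_ <-]]]]].
        destruct HK as [u [[z1 [E1 [j1 J1]]] [u' [[Hu <-] [z2 [E2 [j2 J2]]]]]]].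
        apply (Hcl u). split.
        -- apply (@cl_intro V E W W' (S j1) u p); [|exact Hp].
           exists z1. split; [exists u; split; [split; auto|exact E1]|exact J1].
        -- apply (@cl_intro V E W W'' (S j2) u q1); [|exact Hq''].
           exists z2. split; [exists u; split; [split; auto|exact E2]|exact J2].
Qed.
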